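(* Assume $b>1$. For every $1\le i\le b$ and every positive integer $n$, $$p\,d_i(n)>\sum_{k=0}^\infty y_i\bigl(n-k(p-1)\bigr).$$
   Context: Let $q=p^b$ with $p$ prime. Let $y\in\mathbb{Z}_p$ be written $y=\sum_{i=1}^b p^{i-1}y_i$ with $y_i=\sum_{j\ge0}y_{i,j}q^j$, $0\le y_{i,j}<p$, and assume no $y_i$ is a non-negative integer. For $n\ge1$, $d_i(n)=p^{i-1}q^w$ where $w\ge0$ is the unique integer with $\sum_{j=0}^{w-1}y_{i,j}<n\le\sum_{j=0}^{w}y_{i,j}$. For $m\in\mathbb{Z}$, $y_i(m)=\sum_{n=1}^m d_i(n)$, which is $0$ for $m\le0$ (so the sum is finite). *)

(* Defs.v *)
From mathcomp Require Import all_boot all_order all_algebra.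
From Stdlib Require Import ClassicalEpsilon.
Set Implicit Arguments. Unset Strict Implicit. Unset Printing Implicit Defensive.

(* Digits: yd i j = y_{i,j}  (1 <= i <= b, j >= 0), each in [0, p). *)

Definition psum (a : nat -> nat) (w : nat) : nat := \sum_(j < w) a j.

(* the (unique, under the standing hypotheses) w >= 0 with
   S(w) < n <= S(w+1) *)
Definition wexp (a : nat -> nat) (n : nat) : nat :=
  epsilon (inhabits 0%N) (fun w => psum a w < n <= psum a w.+1).

Definition dfun (p b : nat) (yd : nat -> nat -> nat) (i n : nat) : nat :=
  p ^ (i.-1) * (p ^ b) ^ (wexp (yd i) n).

Definition yfun (p b : nat) (yd : nat -> nat -> nat) (i : nat) (m : int) : nat :=
  match m with
  | Posz k => \sum_(1 <= n < k.+1) dfun p b yd i n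
  | Negz _ => 0
  end.

(* Main.v *)
Require Import Defs.
From mathcomp Require Import all_boot all_order all_algebra zify.
From Stdlib Require Import ClassicalEpsilon.
Set Implicit Arguments. Unset Strict Implicit. Unset Printing Implicit Defensive.
Import GRing.Theory.

Lemma psum_rec a w : psum a w.+1 = psum a w + a w.
Proof. by rewrite /psum big_ord_recr. Qed.

Lemma psum0 a : psum a 0 = 0.
Proof. by rewrite /psum big_ord0. Qed.

Lemma psum_mono a w w' : (w <= w')%N -> (psum a w <= psum a w')%N.
Proof.
move=> h; rewrite -(subnKC h); elim: (w' - w)%N => [|d IH]; first by rewrite addn0.
by rewrite addnS psum_rec (leq_trans IH) // leq_addr.
Qed.

Lemma psum_unb a (H : forall N : nat, exists j : nat, (N <= j)%N /\ a j <> 0%N) N :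
  exists w, (N <= psum a w)%N.
Proof.
elim: N => [|N [w Hw]]; first by exists 0%N.
have [j [hj hj0]] := H w.
exists j.+1; rewrite psum_rec.
have := psum_mono a hj; lia.
Qed.

Lemma wexp_spec a (H : forall N : nat, exists j : nat, (N <= j)%N /\ a j <> 0%N) n :
  (0 < n)%N -> (psum a (wexp a n) < n <= psum a (wexp a n).+1)%N.
Proof.
move=> hn; rewrite /wexp; apply: (epsilon_spec (inhabits 0%N) (fun w => psum a w < n <= psum a w.+1)%N).
have ex : exists w, (n <= psum a w)%N by apply: psum_unb.
case: (ex_minnP ex) => m hm hmin.
case: m hm hmin => [|m] hm hmin; first by rewrite psum0 in hm; lia.
exists m; rewrite hm andbT ltnNge; apply/negP => /hmin; lia.
Qed.

Lemma wexp_uniq a (H : forall N : nat, exists j : nat, (N <= j)%N /\ a j <> 0%N) n w :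
  (psum a w < n <= psum a w.+1)%N -> wexp a n = w.
Proof.
move=> /andP [h1 h2].
have /andP [h3 h4] := wexp_spec H (leq_ltn_trans (leq0n _) h1).
case: (ltngtP (wexp a n) w) => // c.
- have := psum_mono a c; lia.
- have := psum_mono a c; lia.
Qed.

Definition ynat p b yd i m := \sum_(1 <= n < m.+1) dfun p b yd i n.

Lemma ynat0 p b yd i : ynat p b yd i 0 = 0%N.
Proof. by rewrite /ynat big_geq. Qed.

Lemma ynatS p b yd i m : ynat p b yd i m.+1 = (ynat p b yd i m + dfun p b yd i m.+1)%N.
Proof. by rewrite /ynat big_nat_recr. Qed.

Lemma ynat_mono p b yd i m m' : (m <= m')%N -> (ynat p b yd i m <= ynat p b yd i m')%N.
Proof.
move=> h; rewrite -(subnKC h); elim: (m' - m)%N => [|d IH]; first by rewrite addn0.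
by rewrite addnS ynatS (leq_trans IH) // leq_addr.
Qed.

Lemma yfun_nat p b yd i n m :
  yfun p b yd i (n%:Z - m%:Z)%R = ynat p b yd i (n - m).
Proof.
case: (leqP m n) => h.
  by rewrite subzn.
have -> : (n%:Z - m%:Z)%R = Negz (m - n).-1.
  by rewrite NegzE prednK ?subn_gt0 // -opprB subzn // ltnW.
have -> : (n - m = 0)%N by lia.
by rewrite ynat0.
Qed.
Section Main.
Variables (p b : nat) (yd : nat -> nat -> nat) (i : nat).
Hypothesis hp2 : (2 <= p)%N.
Hypothesis hq : (p * p <= p ^ b)%N.
Hypothesis hdi : forall j, (yd i j < p)%N.
Hypothesis hni : forall N : nat, exists j : nat, (N <= j)%N /\ yd i j <> 0%N.

Local Notation a := (yd i).
Local Notation S := (psum (yd i)).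
Local Notation e := (p ^ i.-1).
Local Notation q := (p ^ b).
Local Notation X w := (p ^ i.-1 * (p ^ b) ^ w).
Local Notation y := (ynat p b yd i).
Local Notation Y w := (ynat p b yd i (psum (yd i) w)).

Lemma dfun_blk w m : (S w < m <= S w.+1)%N -> dfun p b yd i m = X w.
Proof. by move=> h; rewrite /dfun (wexp_uniq hni h). Qed.

Lemma ynat_blk w k : (k <= a w)%N -> y (S w + k) = (Y w + k * X w)%N.
Proof.
elim: k => [|k IH] hk; first by rewrite addn0 mul0n addn0.
rewrite addnS ynatS IH ?(ltnW hk) // (@dfun_blk w); first by rewrite mulSn; lia.
rewrite psum_rec; lia.
Qed.

Lemma Ysucc w : Y w.+1 = (Y w + a w * X w)%N.
Proof. by rewrite {1}psum_rec ynat_blk. Qed.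

Lemma F1 w : ((p + 1) * Y w + e <= X w)%N.
Proof.
elim: w => [|w IH]; first by rewrite psum0 ynat0 expn0 muln1 muln0.
rewrite Ysucc expnS.
set Z := X w in IH *.
have -> : (e * (q * q ^ w) = q * Z)%N by rewrite /Z mulnCA.
have h1 : (a w * Z <= (p - 1) * Z)%N by apply: leq_mul => //; have := hdi w; lia.
have h2 : (p * p * Z <= q * Z)%N by apply: leq_mul.
nia.
Qed.

Lemma F2 w : ((p + 1) * (q - 1) * (\sum_(v < w.+1) Y v) + e * q <= q * X w)%N.
Proof.
elim: w => [|w IH].
  by rewrite big_ord1 psum0 ynat0 muln0 expn0 muln1 mulnC.
have hZ : (X w.+1 = q * X w)%N by rewrite expnS mulnCA.
rewrite big_ord_recr /= hZ.
have := F1 w.+1; rewrite hZ.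
set V := (\sum_(v < w.+1) Y v) in IH *.
set Z := X w in IH hZ *.
have hq1 : (1 <= q)%N by lia.
move=> h.
have h3 : ((q-1) * ((p + 1) * Y w.+1 + e) <= (q-1) * (q * Z))%N by apply: leq_mul.
nia.
Qed.

Lemma Fin w : (Y w + \sum_(v < w.+1) Y v < X w)%N.
Proof.
have := F1 w; have := F2 w.
set V := (\sum_(v < w.+1) Y v).
set Z := X w.
have he : (0 < e)%N by rewrite expn_gt0; lia.
move=> h2 h1.
have h3 : ((q - 1) * ((p + 1) * Y w + e) <= (q-1) * Z)%N by apply: leq_mul.
have h4 : (2 <= q)%N by nia.
have hA : (0 < (p + 1) * (q - 1))%N by rewrite muln_gt0; lia.
rewrite -(ltn_pmul2l hA) mulnDr.
have -> : ((p + 1) * (q - 1) * Y w = (q - 1) * ((p + 1) * Y w))%N by rewrite mulnCA mulnA.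
rewrite mulnDr in h3.
have h5 : (3 * (q - 1) * Z <= (p + 1) * (q - 1) * Z)%N by apply: leq_mul => //; apply: leq_mul => //; lia.
have h6 : ((q - 1) * e + e * q >= 1)%N by rewrite addn_gt0 muln_gt0; lia.
have h7 : (3 * (q - 1) * Z >= (q - 1) * Z + q * Z)%N.
  rewrite -mulnDl; apply: leq_mul => //; lia.
lia.
Qed.

Lemma R L : forall w n, (n <= S w)%N ->
  (\sum_(k < L) y (n - k * (p - 1)) <= y n + \sum_(v < w) Y v)%N.
Proof.
elim: L => [|L IH] w n hn; first by rewrite big_ord0.
rewrite big_ord_recl mul0n subn0 leq_add2l.
under eq_bigr => k _ do rewrite /= mulSn subnDA.
case: w hn => [|w] hn.
  rewrite psum0 in hn.
  have -> : n = 0%N by lia.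
  rewrite sub0n big_ord0; apply: (leq_trans (IH 0%N _ (leq0n _))).
  by rewrite ynat0 big_ord0.
rewrite big_ord_recr /=.
apply: (leq_trans (IH w _ _)).
  by rewrite psum_rec in hn; have := hdi w; lia.
rewrite addnC leq_add2l ynat_mono //.
by rewrite psum_rec in hn; have := hdi w; lia.
Qed.

End Main.

Theorem lemma6p6 (p b : nat) (yd : nat -> nat -> nat)
  (hp : prime p) (hb : (1 < b)%N)
  (hdig : forall i j, (1 <= i <= b)%N -> (yd i j < p)%N)
  (hnotint : forall i, (1 <= i <= b)%N ->
      forall N : nat, exists j : nat, (N <= j)%N /\ yd i j <> 0%N)
  (i n : nat) (hi : (1 <= i <= b)%N) (hn : (1 <= n)%N) :
  (\sum_(k < n.+1)
      yfun p b yd i ((n%:Z - (k * (p - 1))%:Z)%R)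
     < p * dfun p b yd i n)%N.
Proof.
have hp2 := prime_gt1 hp.
have hq : (p * p <= p ^ b)%N.
  rewrite (_ : p * p = p ^ 2)%N; last by rewrite expnS expn1.
  by rewrite leq_pexp2l // ltnW.
have hdi := fun j => hdig i j hi.
have hni := hnotint i hi.
rewrite (eq_bigr (fun k : 'I_n.+1 => ynat p b yd i (n - k * (p - 1)))); last first.
  by move=> k _; rewrite yfun_nat.
set w := wexp (yd i) n.
have hw : (psum (yd i) w < n <= psum (yd i) w.+1)%N by apply: wexp_spec.
have := @R p b yd i hp2 hq hdi n.+1 w.+1 n (proj2 (andP hw)).
rewrite (@dfun_blk p b yd i hni _ _ hw).
have hn' : n = (psum (yd i) w + (n - psum (yd i) w))%N by lia.
have hy : ynat p b yd i n = (ynat p b yd i (psum (yd i) w) + (n - psum (yd i) w) * (p ^ i.-1 * (p ^ b) ^ w))%N.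
  rewrite {1}hn' (@ynat_blk p b yd i hp2 hq hni) //.
  by move: hw; rewrite psum_rec; lia.
rewrite hy.
have := @Fin p b yd i hp2 hq hdi hni w.
set Z := (p ^ i.-1 * (p ^ b) ^ w)%N.
have hc : ((n - psum (yd i) w) * Z <= (p - 1) * Z)%N.
  by apply: leq_mul => //; move: hw; rewrite psum_rec; have := hdi w; lia.
have hpZ : (p * Z = (p - 1) * Z + Z)%N by rewrite -{3}(mul1n Z) -mulnDl subnK // ltnW.
move=> hF hR.
move: hR hF hc hpZ.
set T := \sum_(k < n.+1) _.
set V := \sum_(v < w.+1) _.
clear; lia.
Qed.
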